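(* Let $\alpha\in(0,1)$ be constant. Suppose $(p_a(t))_{a\in\mathcal A}$ satisfies $p_a(t)>0$ for all $a$ and $\sum_a p_a(t)=1$, and $(p_a(t+1))_{a\in\mathcal A}$ is obtained by one SAMBA update with learning rate $\alpha$. Then $p_a(t+1)>0$ for all $a\in\mathcal A$ and $\sum_a p_a(t+1)=1$.
   Context: One SAMBA update: $a_\star(t)$ is an arm maximizing $p_a(t)$, $p_\star(t)=p_{a_\star(t)}(t)$. Exactly one arm is played; $I_a(t)\in\{0,1\}$ indicates that arm $a$ is played, with $\sum_a I_a(t)=1$; rewards $R_a(t)\in\{0,1\}$; $I_\star(t)=I_{a_\star(t)}(t)$, $R_\star(t)=R_{a_\star(t)}(t)$. For $a\ne a_\star(t)$: $p_a(t+1)=p_a(t)+\alpha p_a(t)^2\big[\frac{I_a(t)R_a(t)}{p_a(t)}-\frac{I_\star(t)R_\star(t)}{p_\star(t)}\big]$, and $p_{a_\star(t)}(t+1)=1-\sum_{a\ne a_\star(t)}p_a(t+1)$. *)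

(* Defs.v *)
From mathcomp Require Import all_boot all_order all_algebra.
Set Implicit Arguments. Unset Strict Implicit. Unset Printing Implicit Defensive.
Import Order.TTheory GRing.Theory Num.Theory.
Local Open Scope ring_scope.

(* One SAMBA update.  [p] : current probabilities, [astar] : the leading arm
   (an arm maximizing p), [I a] : indicator that arm a is played (0/1),
   [Rw a] : reward of arm a (0/1), [alpha] : learning rate. *)
Definition samba_update (A : finType) (R : fieldType)
    (alpha : R) (p : A -> R) (astar : A) (I Rw : A -> bool) : A -> R :=
  let nonleader a :=
    p a + alpha * p a ^+ 2 *
      ((I a)%:R * (Rw a)%:R / p a - (I astar)%:R * (Rw astar)%:R / p astar) in
  fun a => if a == astar then 1 - \sum_(b | b != astar) nonleader b
           else nonleader a.

(* Main.v *)
Require Import Defs.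
From mathcomp Require Import all_boot all_order all_algebra.
From mathcomp Require Import ring lra.
Import Order.TTheory GRing.Theory Num.Theory.
Local Open Scope ring_scope.

Lemma nl_eq (R : realFieldType) (alpha pa ps x y : R) : pa != 0 -> ps != 0 ->
  pa + alpha * pa ^+ 2 * (x / pa - y / ps) =
  pa + alpha * pa * x - alpha * pa * (pa / ps) * y.
Proof. move=> ha hs.
have e : pa ^+ 2 * (x / pa) = pa * x.
  by rewrite expr2 -mulrA; congr (pa * _); rewrite mulrC -mulrA mulVf // mulr1.
rewrite mulrBr -[alpha * pa ^+ 2 * (x / pa)]mulrA e mulrA addrA; congr (_ - _).
rewrite /GRing.exp /=. ring.
Qed.

Lemma b01 (R : realFieldType) (b : bool) : 0 <= (b%:R : R) <= 1.
Proof. by case: b => /=; rewrite ?mulr1n ?ler01 ?lexx. Qed.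

Theorem lemma21 (A : finType) (R : realFieldType) (alpha : R)
    (p : A -> R) (astar : A) (I Rw : A -> bool) :
  0 < alpha < 1 ->
  (forall a, 0 < p a) ->
  \sum_a p a = 1 ->
  (forall a, p a <= p astar) ->
  \sum_a ((I a)%:R : R) = 1 ->
  (forall a, 0 < samba_update alpha p astar I Rw a) /\
  \sum_a samba_update alpha p astar I Rw a = 1.
Proof.
move=> /andP[ha0 ha1] hp hsum hmax hI.
set f := fun a => p a + alpha * p a ^+ 2 *
      ((I a)%:R * (Rw a)%:R / p a - (I astar)%:R * (Rw astar)%:R / p astar).
have hps := hp astar.
have h9 : 0 < 1 - alpha by rewrite subr_gt0.
have hfe : forall a, f a = p a + alpha * p a * ((I a)%:R * (Rw a)%:R)
   - alpha * p a * (p a / p astar) * ((I astar)%:R * (Rw astar)%:R).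
  by move=> a; rewrite /f nl_eq // lt0r_neq0.
have hr : forall a, 0 < p a / p astar <= 1.
  move=> a; rewrite divr_gt0 //= ler_pdivrMr // mul1r; exact: hmax.
have hIs : (I astar)%:R + \sum_(b | b != astar) ((I b)%:R : R) = 1.
  by rewrite -[RHS]hI [RHS](bigD1 astar).
have hIa : forall a, a != astar -> (I a)%:R + (I astar)%:R <= (1 : R).
  move=> a ha; rewrite -[X in _ <= X]hIs addrC lerD2l (bigD1 a) //= lerDl.
  by apply: sumr_ge0 => i _; case/andP: (b01 R (I i)).
have hps1 : p astar + \sum_(b | b != astar) p b = 1.
  by rewrite -[RHS]hsum [RHS](bigD1 astar).
have hsu : forall a, samba_update alpha p astar I Rw a =
   if a == astar then 1 - \sum_(b | b != astar) f b else f a by [].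
have hfb : forall b, b != astar -> f b <= p b + alpha * p astar * (I b)%:R.
  move=> b hb; rewrite hfe.
  have := hr b; have := hp b; have := hmax b.
  have := mulr_gt0 (mulr_gt0 ha0 (hp b)) (proj1 (andP (hr b))).
  have := ler_wpM2l (ltW ha0) (hmax b).
  move: (p b / p astar) => r.
  move: (I b) (Rw b) (I astar) (Rw astar) => [] [] [] [];
    rewrite /= ?mulr1n ?mulr0n ?mulr1 ?mulr0 ?subr0 ?addr0 => h5 h6 h1 h2 /andP[h3 h4]; nra.
split; last first.
  rewrite (bigD1 astar) //= hsu eqxx.
  rewrite [X in _ + X = _](eq_bigr f); first by rewrite subrK.
  by move=> b hb; rewrite hsu (negbTE hb).
move=> a; rewrite hsu; case: ifP => [_|hne0].
  have : \sum_(b | b != astar) f b <=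
         \sum_(b | b != astar) (p b + alpha * p astar * (I b)%:R).
    by apply: ler_sum => b hb; apply: hfb.
  rewrite [X in _ <= X]big_split /= -mulr_sumr.
  have := b01 R (I astar).
  move=> /andP[h1 h2] h3.
  have h4 : \sum_(b | b != astar) ((I b)%:R : R) = 1 - (I astar)%:R.
    by move: hIs; lra.
  have h5 : \sum_(b | b != astar) p b = 1 - p astar.
    by move: hps1; lra.
  rewrite h4 h5 in h3.
  have := mulr_ge0 (ltW (mulr_gt0 ha0 hps)) h1.
  have := mulr_gt0 h9 hps.
  nra.
have hne : a != astar by rewrite hne0.
rewrite hfe.
have := hr a; have := hp a; have := hIa a hne.
have := mulr_gt0 (mulr_gt0 ha0 (hp a)) (proj1 (andP (hr a))).
have := mulr_gt0 h9 (hp a).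
have := ler_wpM2l (ltW (mulr_gt0 ha0 (hp a))) (proj2 (andP (hr a))).
move: (p a / p astar) => r.
move: (I a) (Rw a) (I astar) (Rw astar) => [] [] [] [];
  rewrite /= ?mulr1n ?mulr0n ?mulr1 ?mulr0 ?subr0 ?addr0 => h7 h6 h5 h1 h2 /andP[h3 h4]; nra.
Qed.
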